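(* Let $f:\mathbb{R}^n\to\mathbb{R}$ be a continuously differentiable convex function, and $s$ a positive integer. Let $h(x)=\sum_{i=1}^n h_i(x_i)$ with each $h_i:\mathbb{R}\to\mathbb{R}$ convex and continuously differentiable, and assume $h$ is supercoercive ($\lim_{\|x\|\to\infty}h(x)/\|x\|=\infty$). Assume $L_h h-f$ is convex for some $L_h>0$ and let $L>L_h$. Let $(x_k)$ be generated by the BPG algorithm with $h$ and $L$. Then every limit point $\bar x$ of $(x_k)$ is $L$-Bregman stationary, i.e. $$\bar x\in\operatorname*{argmin}_{y\in C_s}\ \nabla f(\bar x)^T(y-\bar x)+L D_h(y,\bar x).$$
   Context: $C_s=\{x\in\mathbb{R}^n:\|x\|_0\le s\}$ where $\|x\|_0$ is the number of nonzero entries. $D_h(y,x)=h(y)-h(x)-\nabla h(x)^T(y-x)$. BPG algorithm: start from $x_0\in C_s$ and for $k\ge0$ pick $x_{k+1}\in\operatorname{argmin}_{x\in C_s}\ \nabla f(x_k)^T(x-x_k)+LD_h(x,x_k)$. *)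

(* Defs.v *)
From HB Require Import structures.
From mathcomp Require Import all_boot all_order all_algebra.
From mathcomp Require Import all_classical all_reals all_analysis.
Set Implicit Arguments. Unset Strict Implicit. Unset Printing Implicit Defensive.
Import Order.TTheory GRing.Theory Num.Theory.
Import numFieldNormedType.Exports.
Local Open Scope ring_scope.
Local Open Scope classical_set_scope.

Section Defs.
Context {R : realType} {n : nat}.
Local Notation V := 'rV[R]_n.

Definition Pconvex_fun (f : V -> R) : Prop :=
  forall (x y : V) (t : R), 0 <= t -> t <= 1 ->
    f (t *: x + (1 - t) *: y) <= t * f x + (1 - t) * f y.

Definition Pconvex_fun1 (g : R -> R) : Prop :=
  forall (x y t : R), 0 <= t -> t <= 1 ->
    g (t * x + (1 - t) * y) <= t * g x + (1 - t) * g y.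

(* continuously differentiable on R^n: differentiable everywhere and every
   directional derivative x |-> Df(x) v (i.e. each partial derivative) is continuous *)
Definition PC1 (f : V -> R) : Prop :=
  (forall x : V, differentiable f x) /\
  (forall v : V, continuous (fun x : V => ('d f x : V -> R) v)).

Definition PC1_1 (g : R -> R) : Prop :=
  (forall x : R, derivable g x 1) /\ continuous (g^`()).

Definition Pl0norm (x : V) : nat := #|[set i : 'I_n | x ord0 i != 0%R]|.

Definition PCs (s : nat) : set V := [set x | (Pl0norm x <= s)%N].

(* gradient pairing  grad f(x)^T v  :=  Df(x) v *)
Definition PgradT (f : V -> R) (x v : V) : R := ('d f x : V -> R) v.

Definition PDh (h : V -> R) (y x : V) : R := h y - h x - PgradT h x (y - x).

Definition Pis_argmin (C : set V) (phi : V -> R) (z : V) : Prop :=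
  C z /\ forall y, C y -> phi z <= phi y.

Definition bpg_obj (f h : V -> R) (L : R) (xk : V) (y : V) : R :=
  PgradT f xk (y - xk) + L * PDh h y xk.

Definition bpg_seq (f h : V -> R) (L : R) (s : nat) (x : nat -> V) : Prop :=
  PCs s (x 0%N) /\ forall k, Pis_argmin (PCs s) (bpg_obj f h L (x k)) (x k.+1).

Definition Psupercoercive (h : V -> R) : Prop :=
  forall M : R, exists r : R, forall x : V, r < `|x| -> M < h x / `|x|.

Definition Plimit_point (x : nat -> V) (xbar : V) : Prop :=
  exists phi : nat -> nat, (forall k, (phi k < phi k.+1)%N) /\
    (x \o phi) @ \oo --> xbar.

End Defs.

(* Main.v *)
Require Import Defs.
From HB Require Import structures.
From mathcomp Require Import all_boot all_order all_algebra.
From mathcomp Require Import all_classical all_reals all_analysis.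
From mathcomp Require Import ring lra.
Import Order.TTheory GRing.Theory Num.Theory.
Import numFieldNormedType.Exports.
Local Open Scope ring_scope.
Local Open Scope classical_set_scope.

Definition coordf (R : realType) (n : nat) (i : 'I_n) (y : 'rV[R]_n) : R := y ord0 i.
Lemma coordf_lin (R : realType) (n : nat) (i : 'I_n) : linear (@coordf R n i).
Proof. by move=> a y z; rewrite /coordf !mxE. Qed.
HB.instance Definition _ (R : realType) (n : nat) (i : 'I_n) :=
  GRing.isLinear.Build R 'rV[R]_n R *:%R (@coordf R n i) (@coordf_lin R n i).

Section S.
Context {R : realType} {n : nat}.
Local Notation V := 'rV[R]_n.

Lemma right_sub_punct (P : set R) : (0:R)^' P -> (0:R)^'+ P.
Proof.
move=> H.
move: H; rewrite /dnbhs /at_right /within /=.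
apply: filterS => y H y0; apply: H; by rewrite gt_eqF.
Qed.

Lemma grad_ineq_q (g : V -> R) (x v : V) (l : R) : Pconvex_fun g ->
  (fun t : R => t^-1 *: ((g \o shift x) (t *: v) - g x)) @ (0:R)^' --> l ->
  l <= g (x + v) - g x.
Proof.
move=> cg dv.
pose q := fun t : R => t^-1 *: ((g \o shift x) (t *: v) - g x).
have c2 : q t @[t --> (0:R)^'+] --> l.
  move=> P /dv HP; exact: right_sub_punct.
apply: (ler_cvg_to c2 (cvg_cst (g (x + v) - g x))).
near=> t.
have t0 : 0 < t by near: t; exact: nbhs_right_gt.
have t1 : t <= 1 by near: t; apply: nbhs_right_le; exact: ltr01.
rewrite /q /= /shift.
have := cg (x + v) x t (ltW t0) t1.
have -> : t *: (x + v) + (1 - t) *: x = t *: v + x.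
  rewrite scalerDr scalerBl scale1r [t *: x + _]addrC -addrA; congr (_ + _).
  by rewrite addrC subrK.
move=> H; rewrite /GRing.scale /= ler_pdivrMl //. lra.
Unshelve. all: by end_near.
Qed.

Lemma dquot (g : V -> R) (x v : V) : differentiable g x ->
  (fun t : R => t^-1 *: ((g \o shift x) (t *: v) - g x)) @ (0:R)^' -->
  ('d g x : V -> R) v.
Proof.
move=> dg; rewrite -deriveE //.
have dv : derivable g x v by apply: diff_derivable.
exact: dv.
Qed.

Lemma grad_ineq (g : V -> R) x v : Pconvex_fun g -> differentiable g x ->
  ('d g x : V -> R) v <= g (x + v) - g x.
Proof. move=> cg dg; apply: grad_ineq_q => //; exact: dquot. Qed.
Lemma diff_sumf (F : 'I_n -> V -> R) x : (forall i, differentiable (F i) x) ->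
  differentiable (\sum_i F i) x /\
  'd (\sum_i F i) x = \sum_i ('d (F i) x : V -> R) :> (V -> R).
Proof.
move=> dF.
apply: (big_rec2 (fun a b => differentiable a x /\ 'd a x = b :> (V -> R))).
  split; first exact: differentiable_cst.
  exact: (@diff_cst R V R 0 x).
move=> i a b _ [da db]; split; first exact: differentiableD.
by rewrite diffD // db.
Qed.

Lemma h_diff (hi : 'I_n -> R -> R) (h : V -> R) :
  (forall i, PC1_1 (hi i)) ->
  (forall y : V, h y = \sum_(i < n) hi i (y ord0 i)) ->
  forall x, differentiable h x /\
   forall v, ('d h x : V -> R) v = \sum_i v ord0 i * derive1 (hi i) (x ord0 i).
Proof.
move=> C1 hE x.
have -> : h = \sum_i (hi i \o @coordf R n i).
  by apply/funext => y; rewrite hE fct_sumE.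
have cc : forall i, continuous (@coordf R n i).
  move=> i; exact: (@coord_continuous R 1 n ord0 i).
have dc : forall i, differentiable (@coordf R n i) x.
  move=> i; apply: (@linear_differentiable R _ _ (@coordf R n i)); exact: cc.
have dh : forall i t, differentiable (hi i) t.
  by move=> i t; apply/derivable1_diffP; case: (C1 i).
have di : forall i, differentiable (hi i \o @coordf R n i) x.
  by move=> i; apply: differentiable_comp.
have [ds dsE] := @diff_sumf _ x di.
split => // v; rewrite dsE fct_sumE; apply: eq_bigr => i _.
rewrite diff_comp //= diff_lin //; last exact: cc.
by rewrite (diff1E (dh _ _)).
Qed.
Lemma coord_cvg (z : nat -> V) (xb : V) j : z @ \oo --> xb ->
  (fun k => z k ord0 j) @ \oo --> xb ord0 j.
Proof. move=> zc; apply: (@cvg_comp _ _ _ z (fun M : V => M ord0 j) _ _ _ zc); exact: (@coord_continuous R 1 n ord0 j xb). Qed.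

Lemma sum_cvg (z : nat -> V) (xb : V) (c : 'I_n -> V -> R) (y : V) : z @ \oo --> xb ->
  (forall j, (fun k => c j (z k)) @ \oo --> c j xb) ->
  (fun k => \sum_j (y ord0 j - z k ord0 j) * c j (z k)) @ \oo -->
    \sum_j (y ord0 j - xb ord0 j) * c j xb.
Proof.
move=> zc cc; apply: (@cvg_big _ _ +%R 0 xpredT add_continuous) => j _.
apply: cvgM; last exact: cc.
apply: cvgB; [exact: cvg_cst | exact: coord_cvg].
Qed.

Lemma dsum (f : V -> R) x v :
  ('d f x : V -> R) v = \sum_j (v ord0 j) * ('d f x : V -> R) (delta_mx 0 j).
Proof.
rewrite {1}(row_sum_delta v) linear_sum; apply: eq_bigr => j _.
by rewrite linearZ.
Qed.

Lemma Cs_closed (z : nat -> V) (xb : V) s : (forall k, PCs s (z k)) ->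
  z @ \oo --> xb -> PCs s xb.
Proof.
move=> Cz zc.
have H : \forall k \near \oo, forall i, xb ord0 i != 0 -> z k ord0 i != 0.
  apply: filter_forall => i.
  have [xi0|xi0] := eqVneq (xb ord0 i) 0.
    by apply: nearW => k.
  move: (@coord_cvg z xb i zc) => /cvgr_neq0 H0; have := H0 xi0.
  by apply: filterS => k Hk _.
have [N _ HN] := H.
have HNN := HN N (leqnn N).
have Hs : {subset in_set [set i : 'I_n | xb ord0 i != 0] <= in_set [set i : 'I_n | z N ord0 i != 0]}.
  move=> i; rewrite !in_setE /=; exact: HNN.
exact: (leq_trans (subset_leq_card (introT fintype.subsetP Hs)) (Cz N)).
Qed.


Lemma comp_cvg (z : nat -> V) (xb : V) (g : V -> R) : z @ \oo --> xb ->
  {for xb, continuous g} -> (fun k => g (z k)) @ \oo --> g xb.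
Proof. move=> zc gc; exact: (@cvg_comp _ _ _ z g _ _ _ zc gc). Qed.

End S.

Theorem theoremA3 (R : realType) (n s : nat) (f : 'rV[R]_n -> R)
  (hi : 'I_n -> R -> R) (h : 'rV[R]_n -> R) (Lh L : R) (x : nat -> 'rV[R]_n) :
  PC1 f -> Pconvex_fun f -> (0 < s)%N ->
  (forall i, Pconvex_fun1 (hi i)) -> (forall i, PC1_1 (hi i)) ->
  (forall y : 'rV[R]_n, h y = \sum_(i < n) hi i (y ord0 i)) ->
  Psupercoercive h ->
  0 < Lh -> Pconvex_fun (fun y => Lh * h y - f y) -> Lh < L ->
  bpg_seq f h L s x ->
  forall xbar : 'rV[R]_n, Plimit_point x xbar ->
    Pis_argmin (PCs s) (bpg_obj f h L xbar) xbar.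
Proof.
move=> [df cdf] fconv s0 hconv1 C1 hE hsup Lh0 gconv LhL [x0C argm] xbar
  [phi [phinc phic]].
have hd := @h_diff R n hi h C1 hE.
have dh : forall a, differentiable h a by move=> a; case: (hd a).
have hconv : Pconvex_fun h.
  move=> a b t t0 t1; rewrite !hE !mulr_sumr -big_split /=.
  apply: ler_sum => i _; rewrite !mxE; exact: hconv1.
have abE : forall a b : 'rV[R]_n, a + (b - a) = b by move=> a b; rewrite addrC subrK.
have Dpos : forall a b, 0 <= PDh h b a.
  move=> a b; rewrite /PDh /PgradT; have := @grad_ineq R n h a (b - a) hconv (dh a).
  rewrite abE; lra.
have fineq : forall a b, PgradT f a (b - a) <= f b - f a.
  move=> a b; rewrite /PgradT; have := @grad_ineq R n f a (b - a) fconv (df a).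
  by rewrite abE.
have descent : forall a b, f b <= f a + PgradT f a (b - a) + Lh * PDh h b a.
  move=> a b; rewrite /PDh /PgradT.
  have := @grad_ineq_q R n _ a (b - a) (Lh * ('d h a : _ -> R) (b - a) - ('d f a : _ -> R) (b - a)) gconv.
  rewrite abE => H.
  suff : Lh * ('d h a : _ -> R) (b - a) - ('d f a : _ -> R) (b - a) <=
        Lh * h b - f b - (Lh * h a - f a) by lra.
  apply: H.
  have Hh := @dquot R n h a (b - a) (dh a).
  have Hf := @dquot R n f a (b - a) (df a).
  have H2 := cvgB (cvgM (cvg_cst Lh) Hh) Hf.
  have H3 := H2 (dnbhs_filter _) (dnbhs_filter _) (dnbhs_filter _).
  apply: (cvg_trans _ H3); apply: near_eq_cvg; apply: nearW => t /=.
  rewrite /shift /=; set u := _ + a.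
  transitivity (Lh * (t^-1 *: (h u - h a)) - t^-1 *: (f u - f a)); first by [].
  rewrite !scalerBr !scalerAr; ring.
have Cx : forall k, PCs s (x k) by case=> [|k] //; case: (argm k).
have obj0 : forall a, bpg_obj f h L a a = 0.
  by move=> a; rewrite /bpg_obj /PDh /PgradT subrr !linear0 subrr; ring.
have step : forall k, bpg_obj f h L (x k) (x k.+1) <= 0.
  by move=> k; rewrite -(obj0 (x k)); apply: (argm k).2.
have mono : forall k, f (x k.+1) <= f (x k).
  move=> k; have := step k; have := descent (x k) (x k.+1);
  have := Dpos (x k) (x k.+1); rewrite /bpg_obj; nra.
have monoN : forall j k, (j <= k)%N -> f (x k) <= f (x j).
  move=> j; elim=> [|k IH]; first by rewrite leqn0 => /eqP ->.
  rewrite leq_eqVlt => /orP [/eqP <- //|jk].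
  exact: le_trans (mono k) (IH jk).
have key : forall k y, PCs s y -> f (x k.+1) - f (x k) <= bpg_obj f h L (x k) y.
  move=> k y Cy; have := (argm k).2 y Cy; have := descent (x k) (x k.+1);
  have := Dpos (x k) (x k.+1); rewrite /bpg_obj; nra.
have phige : forall k, (k <= phi k)%N.
  elim=> // k IH; exact: (leq_ltn_trans IH (phinc k)).
have fc : (fun k => f (x (phi k))) @ \oo --> f xbar.
  apply: (@comp_cvg R n (x \o phi) xbar f phic); exact: differentiable_continuous.
have flow : forall j, f xbar <= f (x j).
  move=> j; apply: (ler_cvg_to fc (cvg_cst (f (x j)))).
  exists j => // k /= jk; apply: monoN; exact: leq_trans jk (phige k).
have xC : PCs s xbar := @Cs_closed R n (x \o phi) xbar s (fun k => Cx (phi k)) phic.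
split => // y Cy.
rewrite obj0.
have objE : forall z, bpg_obj f h L z y =
   \sum_j (y ord0 j - z ord0 j) * ('d f z : _ -> R) (delta_mx 0 j) +
   L * (h y - h z - \sum_j (y ord0 j - z ord0 j) * derive1 (hi j) (z ord0 j)).
  move=> z; rewrite /bpg_obj /PDh /PgradT dsum (hd z).2.
  congr (_ + L * (_ - _ - _)); apply: eq_bigr => j _; by rewrite !mxE.
have c1 : (fun k => f xbar - f (x (phi k))) @ \oo --> 0.
  rewrite -(subrr (f xbar)); exact: cvgB (cvg_cst _) fc.
apply: (ler_cvg_to c1 (g := fun k => bpg_obj f h L (x (phi k)) y)).
  under eq_cvg do rewrite objE.
  rewrite objE.
  apply: cvgD.
    apply: (@sum_cvg R n (x \o phi) xbar (fun j w => ('d f w : _ -> R) (delta_mx 0 j)) y phic).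
    move=> j; apply: (@comp_cvg R n (x \o phi) xbar (fun w => ('d f w : _ -> R) (delta_mx 0 j)) phic); exact: cdf.
  apply: cvgM; first exact: cvg_cst.
  apply: cvgB.
    apply: cvgB; first exact: cvg_cst.
    apply: (@comp_cvg R n (x \o phi) xbar h phic); exact: differentiable_continuous.
  apply: (@sum_cvg R n (x \o phi) xbar (fun j w => derive1 (hi j) (w ord0 j)) y phic).
  move=> j; apply: (@cvg_comp _ _ _ (fun k => x (phi k) ord0 j) (derive1 (hi j)) _ _ _ (@coord_cvg R n (x \o phi) xbar j phic)).
  have [_ cj] := C1 j; exact: cj.
apply: nearW => k /=.
have := flow (phi k).+1; have := key (phi k) y Cy; lra.
Qed.
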